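(* For every $\lambda\in\mathbb{C}$, $$\det\left(\mathbf{P}_2^{-1}\mathbf{K}-\lambda I_{2m+n}\right)=(1-\lambda)^{2m}\det\left(B^{-1}H-\lambda I_n\right).$$ Consequently $\mathbf{P}_2^{-1}\mathbf{K}$ has the same eigenvalues (with algebraic multiplicities) as $\mathbf{P}_4^{-1}\mathbf{K}$: the value $1$ with multiplicity (at least) $2m$ together with the eigenvalues of $B^{-1}H$.
   Context: Let $m,n\ge 1$. Let $R_u\in\mathbb{R}^{m\times m}$ be invertible, $R_z\in\mathbb{R}^{m\times n}$, $L_{uu}\in\mathbb{R}^{m\times m}$ symmetric, $L_{uz}\in\mathbb{R}^{m\times n}$, $L_{zu}:=L_{uz}^T$, $L_{zz}\in\mathbb{R}^{n\times n}$ symmetric, and $B\in\mathbb{R}^{n\times n}$ invertible. Write $R_u^{-T}:=(R_u^{-1})^T$. Define the reduced Hessian $H:=L_{zz}-L_{zu}R_u^{-1}R_z-R_z^TR_u^{-T}L_{uz}+R_z^TR_u^{-T}L_{uu}R_u^{-1}R_z$. The KKT matrix is $\mathbf{K}:=\begin{bmatrix} L_{uu} & L_{uz} & R_u^T\\ L_{zu} & L_{zz} & R_z^T\\ R_u & R_z & 0\end{bmatrix}$ and $\mathbf{P}_2:=\begin{bmatrix} 0 & 0 & R_u^T\\ 0 & B & R_z^T\\ R_u & R_z & 0\end{bmatrix}$. $\mathbf{P}_4:=\mathbf{K}_1\mathbf{K}_2$ with $\mathbf{K}_1=\begin{bmatrix} L_{uu}R_u^{-1} & 0 & I_m\\ L_{zu}R_u^{-1}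 & I_n & R_z^TR_u^{-T}\\ I_m & 0 & 0\end{bmatrix}$, $\mathbf{K}_2=\begin{bmatrix} R_u & R_z & 0\\ 0 & B & 0\\ 0 & L_{uz}-L_{uu}R_u^{-1}R_z & R_u^T\end{bmatrix}$. *)

(* Defs.v *)
(* Real matrices over an arbitrary real closed field R
   (which includes the reals); complex numbers are R[i]. *)
From mathcomp Require Import all_boot all_order all_algebra.
From mathcomp.real_closed Require Export complex.
Set Implicit Arguments. Unset Strict Implicit. Unset Printing Implicit Defensive.
Import GRing.Theory Num.Theory.
Local Open Scope ring_scope.

Section Defs.
Variables (R : comUnitRingType) (m n : nat).
Variables (Ru : 'M[R]_m) (Rz : 'M[R]_(m, n)) (Luu : 'M[R]_m) (Luz : 'M[R]_(m, n))
          (Lzz : 'M[R]_n) (B : 'M[R]_n).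

Definition Lzu := Luz^T.
Definition RuinvT := (invmx Ru)^T.

Definition redHess : 'M[R]_n :=
  Lzz - Lzu *m invmx Ru *m Rz - Rz^T *m RuinvT *m Luz
  + Rz^T *m RuinvT *m Luu *m invmx Ru *m Rz.

(* 3x3 block matrices with block sizes (m, n, m), encoded as
   block_mx over the splitting (m + n) + m. *)
Definition KKT : 'M[R]_(m + n + m) :=
  block_mx (block_mx Luu Luz Lzu Lzz) (col_mx Ru^T Rz^T) (row_mx Ru Rz) 0.

Definition P2 : 'M[R]_(m + n + m) :=
  block_mx (block_mx 0 0 0 B) (col_mx Ru^T Rz^T) (row_mx Ru Rz) 0.

Definition K1 : 'M[R]_(m + n + m) :=
  block_mx (block_mx (Luu *m invmx Ru) 0 (Lzu *m invmx Ru) 1%:M)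
           (col_mx 1%:M (Rz^T *m RuinvT)) (row_mx 1%:M 0) 0.

Definition K2 : 'M[R]_(m + n + m) :=
  block_mx (block_mx Ru Rz 0 B) (col_mx 0 0)
           (row_mx 0 (Luz - Luu *m invmx Ru *m Rz)) Ru^T.

Definition P4 : 'M[R]_(m + n + m) := K1 *m K2.
End Defs.

(* Main.v *)
Require Import Defs.
From mathcomp Require Import all_boot all_order all_algebra.
From mathcomp.real_closed Require Import complex.
From mathcomp Require Import ring.
Import GRing.Theory Num.Theory.
Local Open Scope ring_scope.
Set Implicit Arguments. Unset Strict Implicit. Unset Printing Implicit Defensive.

Ltac bsimp := repeat progress rewrite ?mulmx_block ?mul_block_col ?mul_row_block ?mul_row_col ?mul_col_row
  ?(mul0mx, mulmx0, mul1mx, mulmx1, add0r, addr0, mulNmx, mulmxN, row_mx0, col_mx0, block_mx0, add_block_mx, add_col_mx, add_row_mx, addNr, addrN, opprK).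

Lemma zmod4 (V : zmodType) (a b c d : V) :
  - (- a + b) + (- c + d) = d - b - c + a.
Proof. rewrite opprD opprK addrC -!addrA addrCA; congr (_ + _).
by rewrite [RHS]addrCA (addrC a).
Qed.

Lemma zmod6 (V : zmodType) (a b c d : V) :
  a + b + (c - d) - a - c + d = b.
Proof. by rewrite -[a + b + _ - a]addrAC [a + b]addrC addrK addrA (addrAC (b + c)) addrK subrK. Qed.

Section Gen.
Variables (S : comUnitRingType) (m n : nat).
Variables (Ru : 'M[S]_m) (Rz : 'M[S]_(m, n)).
Hypothesis RuU : Ru \in unitmx.
Let N := invmx Ru *m Rz.
Let Mt := Rz^T *m (invmx Ru)^T.

Definition F (Auu : 'M[S]_m) (Auz : 'M[S]_(m,n)) (Azu : 'M[S]_(n,m)) (Azz : 'M[S]_n) (c : S)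
  : 'M[S]_(m + n + m) :=
 block_mx (block_mx Auu Auz Azu Azz) (col_mx (c *: Ru^T) (c *: Rz^T))
          (row_mx (c *: Ru) (c *: Rz)) 0.

Definition Hg (Auu : 'M[S]_m) (Auz : 'M[S]_(m,n)) (Azu : 'M[S]_(n,m)) (Azz : 'M[S]_n) :=
  Azz - Azu *m N - Mt *m Auz + Mt *m Auu *m N.

Definition Lf : 'M[S]_(m + n + m) :=
  block_mx (block_mx 0 0 (- Mt) 1%:M) (col_mx 1%:M 0) (row_mx 1%:M 0) 0.
Definition Lfi : 'M[S]_(m + n + m) :=
  block_mx (block_mx 0 0 0 1%:M) (col_mx 1%:M Mt) (row_mx 1%:M 0) 0.
Definition Rf : 'M[S]_(m + n + m) :=
  block_mx (block_mx 1%:M (- N) 0 1%:M) 0 0 1%:M.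

Lemma MtRu : Mt *m Ru^T = Rz^T.
Proof. by rewrite /Mt -mulmxA -trmx_mul mulmxV // trmx1 mulmx1. Qed.
Lemma RuN : Ru *m N = Rz.
Proof. by rewrite /N mulmxA mulmxV // mul1mx. Qed.

Lemma LfLfi : Lf *m Lfi = 1%:M.
Proof.
rewrite /Lf /Lfi; bsimp.
by rewrite -!scalar_mx_block.
Qed.

Lemma elimF Auu Auz Azu Azz c :
  Lf *m F Auu Auz Azu Azz c *m Rf =
  block_mx (block_mx (c *: Ru) 0 (Azu - Mt *m Auu) (Hg Auu Auz Azu Azz)) 0
           (row_mx Auu (Auz - Auu *m N)) (c *: Ru^T).
Proof.
rewrite /Lf /F /Rf; bsimp.
rewrite -!scalemxAl -!scalemxAr MtRu RuN !addNr col_mx0 /Hg.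
congr (block_mx (block_mx _ _ _ _) _ (row_mx _ _) _); try by rewrite addrC.
by rewrite mulmxDl mulNmx zmod4.
Qed.

Lemma detRf : \det Rf = 1.
Proof. by rewrite /Rf det_ublock det_ublock !det1 !mul1r. Qed.

Lemma detLf_unit : \det Lf \is a GRing.unit.
Proof. by apply/unitrPr; exists (\det Lfi); rewrite -det_mulmx LfLfi det1. Qed.

Lemma detF Auu Auz Azu Azz c :
  \det (F Auu Auz Azu Azz c) * \det Lf
  = c ^+ (2 * m) * \det Ru ^+ 2 * \det (Hg Auu Auz Azu Azz).
Proof.
rewrite mulrC.
have := congr1 determinant (elimF Auu Auz Azu Azz c).
rewrite !det_mulmx detRf mulr1 det_lblock det_lblock !detZ det_tr => ->.
by rewrite mul2n -addnn exprD; ring.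
Qed.

Lemma HgD A1 A2 A3 A4 B1 B2 B3 B4 :
  Hg (A1 + B1) (A2 + B2) (A3 + B3) (A4 + B4) = Hg A1 A2 A3 A4 + Hg B1 B2 B3 B4.
Proof.
rewrite /Hg !mulmxDl !mulmxDr !mulmxDl !opprD.
by rewrite [RHS]addrACA; congr (_ + _); rewrite [RHS]addrACA; congr (_ + _);
  rewrite [RHS]addrACA.
Qed.

Lemma HgZ k A1 A2 A3 A4 :
  Hg (k *: A1) (k *: A2) (k *: A3) (k *: A4) = k *: Hg A1 A2 A3 A4.
Proof.
by rewrite /Hg -!scalemxAl -!scalemxAr -!scalemxAl !scalerDr !scalerN.
Qed.

Lemma F_lin A1 A2 A3 A4 P1 P2 P3 P4 (lam : S) :
  F A1 A2 A3 A4 1 - lam *: F P1 P2 P3 P4 1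
  = F (A1 + (- lam) *: P1) (A2 + (- lam) *: P2) (A3 + (- lam) *: P3)
      (A4 + (- lam) *: P4) (1 - lam).
Proof.
rewrite /F -scaleNr !scale_block_mx !scale_col_mx !scale_row_mx !add_block_mx
  !add_col_mx !add_row_mx !scalerA !mulr1 scaler0 addr0.
by rewrite -!scalerDl.
Qed.


Lemma gen K1 K2 K3 K4 P1 P2 P3 P4 (lam : S) :
  Hg P1 P2 P3 P4 \in unitmx ->
  \det (invmx (F P1 P2 P3 P4 1) *m F K1 K2 K3 K4 1 - lam%:M)
  = (1 - lam) ^+ (2 * m) * \det (invmx (Hg P1 P2 P3 P4) *m Hg K1 K2 K3 K4 - lam%:M).
Proof.
move=> HPU.
set P := F P1 P2 P3 P4 1; set HP := Hg P1 P2 P3 P4.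
have dP : \det P * \det Lf = \det Ru ^+ 2 * \det HP by rewrite detF expr1n mul1r.
have sU := detLf_unit.
have PU : \det P \is a GRing.unit.
  have : (\det P * \det Lf) \is a GRing.unit.
    by rewrite dP unitrM expr2 !unitrM -!unitmxE RuU HPU.
  by rewrite unitrM => /andP[].
have -> : invmx P *m F K1 K2 K3 K4 1 - lam%:M = invmx P *m (F K1 K2 K3 K4 1 - lam *: P).
  by rewrite mulmxBr -scalemxAr mulVmx ?unitmxE // scalemx1.
rewrite F_lin det_mulmx det_inv.
have E := detF (K1 + (- lam) *: P1) (K2 + (- lam) *: P2) (K3 + (- lam) *: P3)
  (K4 + (- lam) *: P4) (1 - lam).
rewrite HgD HgZ -/HP in E.
have HE : Hg K1 K2 K3 K4 + - lam *: HP = HP *m (invmx HP *m Hg K1 K2 K3 K4 - lam%:M).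
  by rewrite mulmxBr mulmxA mulmxV // mul1mx mul_mx_scalar scaleNr.
rewrite HE det_mulmx in E.
set X := \det (F _ _ _ _ _) in E *.
set D := \det (_ - lam%:M) in E *.
have -> : X = (1 - lam) ^+ (2 * m) * D * \det P.
  rewrite -(mulrK sU X) E -[in RHS](mulrK sU (_ * D * \det P)).
  congr (_ / _).
  transitivity ((1 - lam) ^+ (2 * m) * D * (\det P * \det Lf)); last by ring.
  by rewrite dP; ring.
by rewrite mulrC mulrK.
Qed.

End Gen.

Section Spec.
Variables (S : comUnitRingType) (m n : nat).
Variables (Ru : 'M[S]_m) (Rz : 'M[S]_(m, n)) (Luu : 'M[S]_m) (Luz : 'M[S]_(m, n))
          (Lzz : 'M[S]_n) (B : 'M[S]_n).
Hypothesis RuU : Ru \in unitmx.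
Hypothesis BU : B \in unitmx.

Lemma P2_F : P2 Ru Rz B = F Ru Rz 0 0 0 B 1.
Proof. by rewrite /P2 /F !scale1r. Qed.
Lemma KKT_F : KKT Ru Rz Luu Luz Lzz = F Ru Rz Luu Luz Luz^T Lzz 1.
Proof. by rewrite /KKT /F /Lzu !scale1r. Qed.
Lemma Hg_B : Hg Ru Rz 0 0 0 B = B.
Proof. by rewrite /Hg !mulmx0 !mul0mx !subr0 addr0. Qed.
Lemma Hg_H : Hg Ru Rz Luu Luz Luz^T Lzz = redHess Ru Rz Luu Luz Lzz.
Proof. by rewrite /Hg /redHess /Lzu /RuinvT !mulmxA. Qed.

Let N := invmx Ru *m Rz.
Let Mt := Rz^T *m (invmx Ru)^T.
Let P4zz := Luz^T *m N + B + Mt *m (Luz - Luu *m N).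

Lemma P4_F : P4 Ru Rz Luu Luz B = F Ru Rz Luu Luz Luz^T P4zz 1.
Proof.
rewrite /P4 /K1 /K2 /F /Lzu /RuinvT; bsimp.
have tI : (invmx Ru)^T *m Ru^T = 1%:M by rewrite -trmx_mul mulmxV // trmx1.
rewrite !scale1r mul_col_mx mul1mx -[Rz^T *m _ *m Ru^T]mulmxA tI mulmx1 -!(mulmxA _ (invmx Ru) Ru) mulVmx // !mulmx1 (addrC (Luu *m invmx Ru *m Rz)) subrK.
by rewrite /P4zz /N /Mt !mulmxA.
Qed.

Lemma Hg_P4 : Hg Ru Rz Luu Luz Luz^T P4zz = B.
Proof.
by rewrite /Hg /P4zz -/N -/Mt mulmxBr (mulmxA Mt Luu N) zmod6.
Qed.

Lemma thm2 lam :
  \det (invmx (P4 Ru Rz Luu Luz B) *m KKT Ru Rz Luu Luz Lzz - lam%:M)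
  = (1 - lam) ^+ (2 * m) * \det (invmx B *m redHess Ru Rz Luu Luz Lzz - lam%:M).
Proof. by rewrite P4_F KKT_F gen // ?Hg_P4 // Hg_H. Qed.

Lemma thm1 lam :
  \det (invmx (P2 Ru Rz B) *m KKT Ru Rz Luu Luz Lzz - lam%:M)
  = (1 - lam) ^+ (2 * m) * \det (invmx B *m redHess Ru Rz Luu Luz Lzz - lam%:M).
Proof. by rewrite P2_F KKT_F gen // ?Hg_B // Hg_H. Qed.
End Spec.

Section Map.
Variables (aF : fieldType) (rF : comUnitRingType) (f : {rmorphism aF -> rF}).
Variables (m n : nat).
Variables (Ru : 'M[aF]_m) (Rz : 'M[aF]_(m, n)) (Luu : 'M[aF]_m) (Luz : 'M[aF]_(m, n))
          (Lzz : 'M[aF]_n) (B : 'M[aF]_n).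

Lemma map_P2 : map_mx f (P2 Ru Rz B) = P2 (map_mx f Ru) (map_mx f Rz) (map_mx f B).
Proof.
by rewrite /P2 (map_block_mx f (block_mx _ _ _ _)) map_block_mx map_col_mx map_row_mx
  !map_mx0 !map_trmx.
Qed.
Lemma map_KKT : map_mx f (KKT Ru Rz Luu Luz Lzz)
  = KKT (map_mx f Ru) (map_mx f Rz) (map_mx f Luu) (map_mx f Luz) (map_mx f Lzz).
Proof.
by rewrite /KKT /Lzu (map_block_mx f (block_mx _ _ _ _)) map_block_mx map_col_mx map_row_mx
  !map_mx0 !map_trmx.
Qed.
Lemma map_P4 : map_mx f (P4 Ru Rz Luu Luz B)
  = P4 (map_mx f Ru) (map_mx f Rz) (map_mx f Luu) (map_mx f Luz) (map_mx f B).
Proof.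
rewrite /P4 /K1 /K2 /Lzu /RuinvT map_mxM (map_block_mx f (block_mx _ _ _ _))
  (map_block_mx f (block_mx _ _ _ _)) !map_block_mx !map_col_mx !map_row_mx.
by rewrite ?map_mx0 ?map_mx1 ?map_mxB ?map_mxM -?map_trmx ?map_invmx.
Qed.
Lemma map_H : map_mx f (redHess Ru Rz Luu Luz Lzz)
  = redHess (map_mx f Ru) (map_mx f Rz) (map_mx f Luu) (map_mx f Luz) (map_mx f Lzz).
Proof.
by rewrite /redHess /Lzu /RuinvT ?(map_mxD, map_mxB, map_mxN) ?map_mxM -?map_trmx ?map_invmx.
Qed.
End Map.

Lemma charN (R : fieldType) k (A : 'M[R]_k) :
  char_poly A = (-1) ^+ k * \det (map_mx polyC A - 'X%:M).
Proof. by rewrite /char_poly /char_poly_mx -opprB -scaleN1r detZ. Qed.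

Local Open Scope complex_scope.

Theorem mainTheorem7 (R : rcfType) (m n : nat)
  (Ru : 'M[R]_m) (Rz : 'M[R]_(m, n)) (Luu : 'M[R]_m) (Luz : 'M[R]_(m, n))
  (Lzz : 'M[R]_n) (B : 'M[R]_n) :
  Ru \in unitmx -> B \in unitmx -> Luu^T = Luu -> Lzz^T = Lzz ->
  (forall lambda : R[i],
     \det (map_mx (real_complex R) (invmx (P2 Ru Rz B) *m KKT Ru Rz Luu Luz Lzz)
           - lambda%:M)
     = (1 - lambda) ^+ (2 * m)
       * \det (map_mx (real_complex R) (invmx B *m redHess Ru Rz Luu Luz Lzz)
               - lambda%:M))
  /\ char_poly (invmx (P2 Ru Rz B) *m KKT Ru Rz Luu Luz Lzz)
     = char_poly (invmx (P4 Ru Rz Luu Luz B) *m KKT Ru Rz Luu Luz Lzz).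
Proof.
move=> RuU BU _ _; split.
  move=> lam; rewrite ?map_mxM ?map_invmx map_P2 map_KKT map_H thm1 //;
    by rewrite map_unitmx.
rewrite !charN ?map_mxM ?map_invmx map_P2 map_P4 map_KKT thm1 ?thm2 //;
  by rewrite map_unitmx.
Qed.
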